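(* Let $X$ be a topological space homeomorphic to $G^\ast$ for some g-cell structure $\{(G_n,r_n),g_n^{n+1}\}$ with inverse limit $G_\infty$ and natural relation $r$. Suppose that (i) every $G_n$ is a metrizable (metric) space, and (ii) for every $\bar x\in G_\infty$ and every open set $A\subset G_\infty$ with $B(\bar x,r)\subset A$ there exists a basic open set $U=g_i^{-1}(V)$ ($i\in\mathbb{N}$, $V\subset G_i$ open) with $\bar x\in U$ and $B(U,r)\subset A$. Then $X$ is normal.
   Context: A cellular graph is a pair $(G,r)$ where $G$ is a nonempty topological space and $r\subset G\times G$ is a reflexive and symmetric relation. For $u\in G$, $B(u,r)=\{v\in G:(u,v)\in r\}$, and for $A\subset G$, $B(A,r)=\bigcup_{a\in A}B(a,r)$. An inverse sequence of cellular graphs $\{(G_n,r_n),g_n^{n+1}\}$ consists of cellular graphs $(G_n,r_n)$, $n\in\mathbb{N}$, and continuous maps $g_n^{n+1}:G_{n+1}\to G_n$ such that $(g_n^{n+1}(x),g_n^{n+1}(y))\in r_n$ whenever $(x,y)\in r_{n+1}$; $g_n^n=\mathrm{id}$, $g_n^l=g_n^{n+1}\circ\cdots\circ g_{l-1}^{l}$. Its inverse limit is $G_\infty=\{(x_n)\in\prod_n G_n: g_i^j(x_j)=x_i\ \forall j\ge i\}$ with the subspace of the product topology; $g_i:G_\infty\to G_i$ is the restricted $i$-th projection. The natural relation on $G_\infty$ is $r=\{(\bar x,\bar y):(x_n,y_n)\in r_n\ \forall n\}$. The sequence is a g-cell structure if $r$ is an equivalence relation; then $G^\ast=G_\infty/r$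 with the quotient topology. *)

(* Defs.v *)
From HB Require Import structures.
From mathcomp Require Import all_boot all_order all_algebra.
From mathcomp Require Import all_classical all_reals.
From mathcomp Require Import topology_structure initial_topology subtype_topology
  function_spaces separation_axioms.
From Stdlib Require Import Reals.

Set Implicit Arguments.
Unset Strict Implicit.
Unset Printing Implicit Defensive.

Local Open Scope classical_set_scope.

Definition cellular_graph (G : topologicalType) (r : G -> G -> Prop) : Prop :=
  (exists x : G, True) /\ (forall x, r x x) /\ (forall x y, r x y -> r y x).

Definition inverse_seq_cg (G : nat -> topologicalType)
  (r : forall n, G n -> G n -> Prop) (g : forall n, G n.+1 -> G n) : Prop :=
  (forall n, cellular_graph (r n)) /\
  (forall n, continuous (g n)) /\
  (forall n (x y : G n.+1), r n.+1 x y -> r n (g n x) (g n y)).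

Definition inv_lim_set (G : nat -> topologicalType) (g : forall n, G n.+1 -> G n)
  : set (prod_topology G) :=
  [set x | forall n, g n (x n.+1) = x n].

Definition Ginf (G : nat -> topologicalType) (g : forall n, G n.+1 -> G n) :=
  set_type (inv_lim_set g).

Definition proj_inf (G : nat -> topologicalType) (g : forall n, G n.+1 -> G n)
  (i : nat) (x : Ginf g) : G i := (set_val x : prod_topology G) i.
Arguments proj_inf {G} g i x.

Definition natrel (G : nat -> topologicalType) (r : forall n, G n -> G n -> Prop)
  (g : forall n, G n.+1 -> G n) (x y : Ginf g) : Prop :=
  forall n, r n (proj_inf g n x) (proj_inf g n y).
Arguments natrel {G} r g x y.

Definition Bpt (T : Type) (r : T -> T -> Prop) (u : T) : set T := [set v | r u v].
Definition Bset (T : Type) (r : T -> T -> Prop) (A : set T) : set T :=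
  [set v | exists2 a, A a & r a v].

Definition equivalence_rel (T : Type) (r : T -> T -> Prop) : Prop :=
  (forall x, r x x) /\ (forall x y, r x y -> r y x) /\
  (forall x y z, r x y -> r y z -> r x z).

Definition gcell_structure (G : nat -> topologicalType)
  (r : forall n, G n -> G n -> Prop) (g : forall n, G n.+1 -> G n) : Prop :=
  inverse_seq_cg r g /\ equivalence_rel (natrel r g).

Section Quotient.
Variables (T : topologicalType) (e : T -> T -> Prop).

Definition eclasses := {C : set T | exists x, C = Bpt e x}.

HB.instance Definition _ := gen_eqMixin eclasses.
HB.instance Definition _ := gen_choiceMixin eclasses.

Definition eclass (x : T) : eclasses := exist _ (Bpt e x) (ex_intro _ x erefl).

Definition eclasses_open (U : set eclasses) : Prop := open (eclass @^-1` U).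

Program Definition eclasses_topology_mixin :=
  @isOpenTopological.Build eclasses eclasses_open _ _ _.
Next Obligation. by rewrite /eclasses_open preimage_setT; exact: openT. Qed.
Next Obligation.
by move=> A B oA oB; rewrite /eclasses_open preimage_setI; exact: openI.
Qed.
Next Obligation.
move=> I f ofi; rewrite /eclasses_open preimage_bigcup.
by apply: bigcup_open => i _; exact: ofi.
Qed.
HB.instance Definition _ := eclasses_topology_mixin.

End Quotient.

Definition Gstar (G : nat -> topologicalType)
  (r : forall n, G n -> G n -> Prop) (g : forall n, G n.+1 -> G n) : topologicalType :=
  eclasses (natrel r g).

Definition homeomorphic (X Y : topologicalType) : Prop :=
  exists (f : X -> Y) (h : Y -> X),
    cancel f h /\ cancel h f /\ continuous f /\ continuous h.

Definition metrizable (T : topologicalType) : Prop :=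
  exists d : T -> T -> R,
    (forall x y, (0 <= d x y)%R) /\
    (forall x y, d x y = 0%R <-> x = y) /\
    (forall x y, d x y = d y x) /\
    (forall x y z, (d x z <= d x y + d y z)%R) /\
    (forall A : set T, open A <->
       (forall x, A x -> exists2 eps : R, (0 < eps)%R &
          [set y | (d x y < eps)%R] `<=` A)).

(* Main.v *)
Require Import Defs.
From HB Require Import structures.
From mathcomp Require Import all_boot all_order all_algebra.
From mathcomp Require Import all_classical all_reals.
From mathcomp Require Import topology_structure initial_topology subtype_topology
  function_spaces separation_axioms supremum_topology.
From Stdlib Require Import Reals Lra.
Local Open Scope classical_set_scope.
Local Open Scope R_scope.

Definition sep_space (T : topologicalType) := forall A B : set T,
  closed A -> closed B -> (forall z, A z -> B z -> False) ->
  exists U V : set T, open U /\ open V /\ A `<=` U /\ B `<=` V /\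
    (forall z, U z -> V z -> False).

Lemma open_from_local (T : topologicalType) (W : set T) :
  (forall z, W z -> exists O, open O /\ O z /\ O `<=` W) -> open W.
Proof.
move=> H; rewrite openE => z Wz.
have [O [oO [Oz OW]]] := H z Wz.
apply: (@filterS _ _ _ O) => //; exact: open_nbhs_nbhs.
Qed.

Lemma metric_sep (T : topologicalType) (Bl : T -> T -> R -> Prop)
  (Bsym : forall x y e, Bl x y e -> Bl y x e)
  (Btri : forall x y z a b, Bl x y a -> Bl y z b -> Bl x z (a + b))
  (Bmono : forall x y a b, Bl x y a -> a <= b -> Bl x y b)
  (Bslack : forall x y e, Bl x y e -> exists2 e', e' < e & Bl x y e')
  (Brefl : forall x e, 0 < e -> Bl x x e)
  (BL1 : forall (W : set T) x, open W -> W x -> exists2 e, 0 < e & [set y | Bl x y e] `<=` W)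
  (BL2 : forall x e, 0 < e -> exists O : set T, open O /\ O x /\ O `<=` [set y | Bl x y e]) :
  sep_space T.
Proof.
have key : forall (A B : set T), closed B -> (forall z, A z -> B z -> False) ->
    exists eA : T -> R, forall a, A a -> 0 < eA a /\ [set y | Bl a y (eA a)] `<=` ~` B.
  move=> A B cB AB.
  have h : forall a, exists e : R, A a -> 0 < e /\ [set y | Bl a y e] `<=` ~` B.
    move=> a; case: (pselect (A a)) => Aa; last by exists 1.
    have [e e0 He] := BL1 (~` B) a (closed_openC cB) (fun Ba => AB a Aa Ba).
    by exists e.
  have [f Hf] := choice h; by exists f.
have mkU : forall (A : set T) (eA : T -> R), (forall a, A a -> 0 < eA a) ->
    open [set z | exists2 a, A a & Bl a z (eA a / 2)] /\
    A `<=` [set z | exists2 a, A a & Bl a z (eA a / 2)].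
  move=> A eA pos; split; last first.
    move=> a Aa; exists a => //; apply: Brefl; have := pos a Aa; lra.
  apply: open_from_local => z [a Aa Baz].
  have [e' e'lt Be'] := Bslack _ _ _ Baz.
  have [O [oO [Oz OB]]] := BL2 z (eA a / 2 - e') ltac:(lra).
  exists O; split => //; split => // y Oy; exists a => //.
  apply: Bmono (Btri _ _ _ _ _ Be' (OB y Oy)) _; lra.
move=> A B cA cB AB.
have [eA HA] := key A B cB AB.
have [eB HB] := key B A cA (fun z Bz Az => AB z Az Bz).
have [oU AU] := mkU A eA (fun a Aa => (HA a Aa).1).
have [oV BV] := mkU B eB (fun a Aa => (HB a Aa).1).
eexists; eexists; split; first exact: oU; split; first exact: oV.
split; first exact: AU; split; first exact: BV.
move=> z [a Aa Baz] [b Bb Bbz].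
have Bab := Btri _ _ _ _ _ Baz (Bsym _ _ _ Bbz).
case: (Rle_lt_dec (eB b) (eA a)) => hle.
- apply: ((HA a Aa).2 b) Bb; apply: (Bmono _ _ _ _ Bab); lra.
- apply: ((HB b Bb).2 a) Aa; apply: (Bmono _ _ _ _ (Bsym _ _ _ Bab)); lra.
Qed.

Definition ismetric {T : topologicalType} (d : T -> T -> R) :=
    (forall x y, (0 <= d x y)%R) /\
    (forall x y, d x y = 0%R <-> x = y) /\
    (forall x y, d x y = d y x) /\
    (forall x y z, (d x z <= d x y + d y z)%R) /\
    (forall A : set T, open A <->
       (forall x, A x -> exists2 eps : R, (0 < eps)%R &
          [set y | (d x y < eps)%R] `<=` A)).

Lemma dball_open {T : topologicalType} (d : T -> T -> R) : ismetric d ->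
  forall a rho, open [set y | d a y < rho].
Proof.
move=> [d0 [dxx [dsym [dtri dop]]]] a rho; apply/dop => y /= hy.
exists (rho - d a y); first lra.
move=> z /= hz; have := dtri a y z; lra.
Qed.

Lemma cvg_prod {G : nat -> topologicalType} (F : set_system (prod_topology G))
  (x : prod_topology G) : Filter F ->
  (forall i A, open A -> A (x i) -> F (fun y : prod_topology G => A (y i))) -> F --> x.
Proof.
move=> FF H.
apply/(@cvg_sup _ _ _ F x FF) => i A /=.
rewrite (@nbhsE (Topological.Pack _)) => -[B [oB Bx] BA].
case: oB Bx BA => C oC <- Cx CA.
apply: filterS CA _. exact: H.
Qed.

Lemma inv0 n : 0 < / INR n.+1.
Proof. apply: Rinv_0_lt_compat; apply: lt_0_INR; apply/ssrnat.ltP. done. Qed.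

Definition ee {G : nat -> topologicalType} (d : forall n, G n -> G n -> R)
  n (x y : prod_topology G) := Rmin (/ INR n.+1) (d n (x n) (y n)).

Definition Bl {G : nat -> topologicalType} (d : forall n, G n -> G n -> R)
  (x y : prod_topology G) (eps : R) :=
  exists2 dl, dl < eps & forall n, ee d n x y <= dl.

Lemma ee_sym {G d} : (forall n, ismetric (d n)) -> forall n x y, @ee G d n x y = ee d n y x.
Proof. move=> hm n x y; rewrite /ee; have [_ [_ [-> _]]] := hm n; done. Qed.

Lemma ee_tri {G d} : (forall n, ismetric (d n)) -> forall n x y z,
  @ee G d n x z <= ee d n x y + ee d n y z.
Proof.
move=> hm n x y z; have [d0 [_ [_ [dtri _]]]] := hm n.
have := dtri (x n) (y n) (z n); have := d0 (x n) (y n); have := d0 (y n) (z n).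
have := inv0 n.
rewrite /ee /Rmin; repeat case: Rle_dec; lra.
Qed.

Lemma ee_ge0 {G d} : (forall n, ismetric (d n)) -> forall n x y, 0 <= @ee G d n x y.
Proof.
move=> hm n x y; have [d0 _] := hm n; have := d0 (x n) (y n); have := inv0 n.
rewrite /ee /Rmin; case: Rle_dec; lra.
Qed.

Section Balls.
Variables (G : nat -> topologicalType) (d : forall n, G n -> G n -> R).
Hypothesis hm : forall n, ismetric (d n).
Let P := prod_topology G.

Lemma Bl_sym (x y : P) e : Bl d x y e -> Bl d y x e.
Proof. move=> [dl h1 h2]; exists dl => // n; rewrite ee_sym //. Qed.

Lemma Bl_tri (x y z : P) a b : Bl d x y a -> Bl d y z b -> Bl d x z (a + b).
Proof.
move=> [d1 h1 h2] [d2 h3 h4]; exists (d1 + d2); first lra.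
move=> n; have := ee_tri hm n x y z; have := h2 n; have := h4 n; lra.
Qed.

Lemma Bl_mono (x y : P) a b : Bl d x y a -> a <= b -> Bl d x y b.
Proof. move=> [dl h1 h2] ab; exists dl => //; lra. Qed.

Lemma Bl_slack (x y : P) e : Bl d x y e -> exists2 e', e' < e & Bl d x y e'.
Proof.
move=> [dl h1 h2]; exists ((dl + e) / 2); first lra.
exists dl => //; lra.
Qed.

Lemma Bl_refl (x : P) e : 0 < e -> Bl d x x e.
Proof.
move=> e0; exists (e / 2); first lra.
move=> n; have [_ [dxx _]] := hm n.
rewrite /ee (proj2 (dxx (x n) (x n)) erefl).
have := inv0 n; rewrite /Rmin; case: Rle_dec; lra.
Qed.

Lemma Bl_L1 (Q : set P) (x : P) : open Q -> Q x ->
  exists2 e, 0 < e & [set y | Bl d x y e] `<=` Q.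
Proof.
move=> oQ Qx.
pose F := filter_from [set e : R | 0 < e] (fun e => [set y | Bl d x y e]).
have FF : Filter F.
  apply: filter_from_filter; first by exists 1; rewrite /=; lra.
  move=> i j /= i0 j0; exists (Rmin i j).
    rewrite /Rmin; case: Rle_dec => _ //.
  move=> y /= By; split; apply: Bl_mono By _; [exact: Rmin_l | exact: Rmin_r].
have Fx : F --> x.
  apply: cvg_prod => i A oA Ax.
  have [_ [_ [_ [_ dop]]]] := hm i.
  have [rho rho0 Hrho] := (proj1 (dop A) oA) _ Ax.
  exists (Rmin rho (/ INR i.+1)).
    rewrite /= /Rmin; case: Rle_dec => _ //; exact: inv0.
  move=> y [dl h1 h2]; apply: Hrho; rewrite /mkset.
  have := h2 i; rewrite /ee; move: h1; rewrite /Rmin.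
  repeat case: Rle_dec; lra.
have [e e0 He] := Fx Q (open_nbhs_nbhs (conj oQ Qx)).
by exists e.
Qed.

Lemma Bl_L2 (x : P) e : 0 < e ->
  exists O : set P, open O /\ O x /\ O `<=` [set y | Bl d x y e].
Proof.
move=> e0.
have [N [HN N0]] := archimed_cor1 (e / 2) ltac:(lra).
pose Op k := [set y : P | forall n : nat, ltn n k -> d n (x n) (y n) < e / 2].
have oOp : forall k, open (Op k).
  elim=> [|k IH].
    rewrite (_ : Op O = setT); first exact: openT.
    by apply/seteqP; split => y //= _ n.
  rewrite (_ : Op k.+1 = Op k `&` (fun y : P => y k) @^-1` [set z | d k (x k) z < e / 2]).
    apply: openI => //.
    have pc : continuous (fun y : P => y k) := fun y => @proj_continuous nat G k y.
    have := (proj1 (continuousP _)) pc.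
    apply; exact: dball_open.
  apply/seteqP; split => y /=.
    move=> h; split; first by move=> n nk; apply: h; apply: ltnW.
    exact: h k (ltnSn k).
  move=> [h1 h2] n hn; have hn2 : leq n k := hn; move: hn2; rewrite leq_eqVlt => /orP[/eqP -> //|]; exact: h1.
exists (Op N); split; first exact: oOp.
split.
  move=> n _; have [_ [dxx _]] := hm n.
  rewrite (proj2 (dxx (x n) (x n)) erefl); lra.
move=> y Oy; exists (e / 2); first lra.
move=> n; rewrite /ee.
case: (ltnP n N) => hn.
  have := Oy n hn; have := Rmin_r (/ INR n.+1) (d n (x n) (y n)); lra.
have : / INR n.+1 <= / INR N.
  apply: Rinv_le_contravar; first by apply: lt_0_INR.
  apply: le_INR; apply/ssrnat.leP; exact: leqW.
have := Rmin_l (/ INR n.+1) (d n (x n) (y n)); lra.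
Qed.

End Balls.
Local Close Scope R_scope.

Lemma closed_pre {S T : topologicalType} {f : S -> T} :
  (forall U, open U -> open (f @^-1` U)) -> forall C, closed C -> closed (f @^-1` C).
Proof.
move=> hf C cC; have := open_closedC (hf _ (closed_openC cC)).
by rewrite -preimage_setC setCK.
Qed.

Lemma sep_normal (X : topologicalType) : sep_space X -> normal_space X.
Proof.
move=> hs A cA B /set_nbhsP [C [oC AC CB]].
have [U [V [oU [oV [AU [CV UV]]]]]] :=
  hs A (~` C) cA (open_closedC oC) (fun z Az nCz => nCz (AC z Az)).
exists U.
  apply/set_nbhsP; exists U; split => //.
have cV : closed (~` V) := open_closedC oV.
move=> z /(closureS (fun w Uw Vw => UV w Uw Vw)).
rewrite -(proj1 (closure_id _) cV) => nVz.
apply: CB; apply: contrapT => nCz; exact: nVz (CV z nCz).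
Qed.

Lemma sep_homeo (X Y : topologicalType) : homeomorphic X Y -> sep_space Y -> sep_space X.
Proof.
move=> [f [h [fh [hf [cf ch]]]]] hs A B cA cB AB.
have chP := proj1 (continuousP h) ch.
have cfP := proj1 (continuousP f) cf.
have [U [V [oU [oV [AU [BV UV]]]]]] := hs (h @^-1` A) (h @^-1` B)
  (closed_pre chP _ cA) (closed_pre chP _ cB) (fun z => AB (h z)).
exists (f @^-1` U), (f @^-1` V); split; first exact: cfP.
split; first exact: cfP.
split; first by move=> a Aa; apply: AU; rewrite /= fh.
split; first by move=> a Aa; apply: BV; rewrite /= fh.
move=> z; exact: UV.
Qed.

Definition saturated {T : Type} (e : T -> T -> Prop) (S : set T) :=
  forall x y, S x -> e x y -> S y.

Lemma sat_sep (T : topologicalType) (e : T -> T -> Prop) :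
  Defs.equivalence_rel e -> (forall C, closed C -> closed (Bset e C)) -> sep_space T ->
  forall A B : set T, closed A -> closed B -> saturated e A -> saturated e B ->
  (forall z, A z -> B z -> False) ->
  exists U V : set T, open U /\ open V /\ A `<=` U /\ B `<=` V /\
    saturated e U /\ saturated e V /\ (forall z, U z -> V z -> False).
Proof.
move=> [er [es et]] hB hs A B cA cB sA sB AB.
have [U [V [oU [oV [AU [BV UV]]]]]] := hs A B cA cB AB.
have mk : forall (W : set T) (S : set T), open W -> saturated e S -> S `<=` W ->
   [/\ open (~` Bset e (~` W)), S `<=` ~` Bset e (~` W), saturated e (~` Bset e (~` W))
     & ~` Bset e (~` W) `<=` W].
  move=> W S oW sS SW; split.
  - apply: closed_openC; apply: hB; exact: open_closedC.
  - move=> x Sx [c nWc ecx]; apply: nWc; apply: SW; apply: sS Sx _; exact: es.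
  - move=> x y nx exy [c nWc ecy]; apply: nx; exists c => //; apply: et ecy _; exact: es.
  - move=> x nx; apply: contrapT => nWx; apply: nx; exists x => //; exact: er.
have [oU' AU' sU' U'U] := mk U A oU sA AU.
have [oV' BV' sV' V'V] := mk V B oV sB BV.
exists (~` Bset e (~` U)), (~` Bset e (~` V)); do 6 (split => //).
move=> z Uz Vz; exact: UV z (U'U z Uz) (V'V z Vz).
Qed.

Section Quot.
Variables (T : topologicalType) (e : T -> T -> Prop).
Hypothesis he : Defs.equivalence_rel e.

Lemma eclass_eq x y : e x y -> eclass e x = eclass e y.
Proof.
move: he => [er [es et]] exy; rewrite /eclass; apply: eq_exist.
apply/seteqP; split => z /= hz.
  apply: et _ hz; exact: es.
exact: et exy hz.
Qed.

Lemma eclass_inj x y : eclass e x = eclass e y -> e x y.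
Proof.
move: he => [er [es et]] H; have := congr1 sval H => /= H'.
have : Bpt e y y by exact: er.
by rewrite -H'.
Qed.

Lemma eclass_surj (C : eclasses e) : exists x, eclass e x = C.
Proof. case: C => S [x hx]; exists x; rewrite /eclass; apply: eq_exist; by rewrite hx. Qed.

Lemma quot_sep :
  (forall A B : set T, closed A -> closed B -> saturated e A -> saturated e B ->
  (forall z, A z -> B z -> False) ->
  exists U V : set T, open U /\ open V /\ A `<=` U /\ B `<=` V /\
    saturated e U /\ saturated e V /\ (forall z, U z -> V z -> False)) ->
  sep_space (eclasses e).
Proof.
move=> hs A B cA cB AB.
have qo : forall U : set (eclasses e), open U -> open (eclass e @^-1` U) by [].
have satpre : forall C : set (eclasses e), saturated e (eclass e @^-1` C).
  by move=> C x y /= Cx exy; rewrite -(eclass_eq _ _ exy).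
have [U [V [oU [oV [AU [BV [sU [sV UV]]]]]]]] := hs _ _ (closed_pre qo _ cA)
  (closed_pre qo _ cB) (satpre A) (satpre B) (fun z => AB (eclass e z)).
have pre : forall W, saturated e W -> eclass e @^-1` (eclass e @` W) = W.
  move=> W sW; apply/seteqP; split => z /=.
    by move=> [w Ww /eclass_inj ewz]; exact: sW Ww ewz.
  by move=> Wz; exists z.
exists (eclass e @` U), (eclass e @` V); split.
  by change (open (eclass e @^-1` (eclass e @` U))); rewrite pre.
split; first by change (open (eclass e @^-1` (eclass e @` V))); rewrite pre.
split.
  move=> C AC; have [x hx] := eclass_surj C; exists x => //; apply: AU.
  by rewrite /= hx.
split.
  move=> C BC; have [x hx] := eclass_surj C; exists x => //; apply: BV.
  by rewrite /= hx.
move=> C [u Uu Cu] [v Vv Cv]; have evu : e v u := eclass_inj _ _ (etrans Cv (esym Cu)).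
exact: (UV u Uu (sV v u Vv evu)).
Qed.
End Quot.

Lemma proj_inf_cont (G : nat -> topologicalType) (g : forall n, G n.+1 -> G n) i :
  continuous (proj_inf g i).
Proof.
move=> x.
exact: (continuous_comp (@initial_continuous _ _ (@set_val _ (inv_lim_set g)) x) (@proj_continuous nat G i _)).
Qed.

Lemma Ginf_sep (G : nat -> topologicalType) (g : forall n, G n.+1 -> G n)
  (d : forall n, G n -> G n -> R) : (forall n, ismetric (d n)) -> sep_space (Ginf g).
Proof.
move=> hm.
apply: (@metric_sep _ (fun x y e => Bl d (set_val x) (set_val y) e)).
- move=> x y e; exact: Bl_sym.
- move=> x y z a b; exact: Bl_tri.
- move=> x y a b; exact: Bl_mono.
- move=> x y e; exact: Bl_slack.
- move=> x e; exact: Bl_refl.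
- move=> W x [Q oQ QW] Wx.
  have Qx : Q (set_val x) by rewrite -QW in Wx.
  have [e e0 He] := @Bl_L1 _ _ hm _ _ oQ Qx.
  exists e => // y /= By; rewrite -QW; exact: He.
- move=> x e e0; have [O [oO [Ox OB]]] := @Bl_L2 _ _ hm (set_val x) _ e0.
  exists (set_val @^-1` O); split; first by exists O.
  split => //; move=> y Oy; exact: OB.
Qed.

Lemma Bset_closed (G : nat -> topologicalType)
  (r : forall n, G n -> G n -> Prop) (g : forall n, G n.+1 -> G n) :
  Defs.equivalence_rel (natrel r g) ->
  (forall (x : Ginf g) (A : set (Ginf g)), open A -> Bpt (natrel r g) x `<=` A ->
     exists (i : nat) (V : set (G i)), open V /\
       (proj_inf g i @^-1` V) x /\
       Bset (natrel r g) (proj_inf g i @^-1` V) `<=` A) ->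
  forall C, closed C -> closed (Bset (natrel r g) C).
Proof.
move=> [er [es et]] hii C cC.
rewrite -[Bset _ C]setCK; apply: open_closedC; apply: open_from_local => x nx.
have sub : Bpt (natrel r g) x `<=` ~` C.
  move=> y /= rxy Cy; apply: nx; exists y => //; exact: es.
have [i [V [oV [Vx BV]]]] := hii x _ (closed_openC cC) sub.
exists (proj_inf g i @^-1` V); split.
  exact: (proj1 (continuousP _) (@proj_inf_cont G g i)).
split => // y Vy [c Cc rcy].
apply: (BV c) Cc; exists y => //; exact: es.
Qed.

Theorem mainTheorem6 (G : nat -> topologicalType)
  (r : forall n, G n -> G n -> Prop) (g : forall n, G n.+1 -> G n)
  (X : topologicalType) :
  gcell_structure r g ->
  homeomorphic X (Gstar r g) ->
  (forall n, metrizable (G n)) ->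
  (forall (x : Ginf g) (A : set (Ginf g)), open A -> Bpt (natrel r g) x `<=` A ->
     exists (i : nat) (V : set (G i)), open V /\
       (proj_inf g i @^-1` V) x /\
       Bset (natrel r g) (proj_inf g i @^-1` V) `<=` A) ->
  normal_space X.
Proof.
move=> [_ heq] hom hmet hii.
pose d n := proj1_sig (cid (hmet n)).
have hm : forall n, ismetric (d n) := fun n => proj2_sig (cid (hmet n)).
apply: sep_normal; apply: (sep_homeo _ _ hom).
apply: quot_sep => //.
apply: sat_sep => //.
- exact: Bset_closed.
- exact: Ginf_sep hm.
Qed.
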